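(* Let $\mathsf{K}$ be a non-trivial logical class contained in $\mathsf{uSL}_\infty$. Then either $\mathsf{uSL}_\omega\subseteq\mathsf{K}$ or $\mathsf{K}=\mathsf{uSL}_n$ for some integer $n\ge1$. Consequently the only non-trivial proper finitary logical classes contained in $\mathsf{uSL}_\infty$ are the classes $\mathsf{uSL}_n$, $n\ge1$.
   Context: A unital meet semilattice is an algebra $\langle S,\wedge,1\rangle$ with $1$ the top element. Structures are pairs $\langle\mathbf{S},F\rangle$ with $\mathbf{S}$ a unital meet semilattice and $F\subseteq\mathbf{S}$. A homomorphism $h\colon\langle\mathbf{A},F\rangle\to\langle\mathbf{B},G\rangle$ is strict if $F=h^{-1}[G]$. A logical class is a class closed under isomorphism, substructures, products $\langle\prod\mathbf{A}_i,\prod F_i\rangle$, strict homomorphic preimages and strict homomorphic images (along surjective strict homomorphisms); it is finitary if closed under ultraproducts, and trivial if all members have $F=\mathbf{S}$. For a set $X$, $Y\subseteq_nX$ means $Y$ non-empty, $Y\subseteq X$, $|Y|\le n$. An $n$-filter is an upset $F$ such that for every non-empty finite $X\subseteq F$, if $\bigwedge Y\in F$ for all $Y\subseteq_nX$ then $\bigwedge X\in F$. $\mathsf{uSL}_\infty$ consists of all $\langle\mathbf{S},F\rangle$ with $F$ a non-empty upset; $\mathsf{uSL}_n$ those with $F$ a non-empty $n$-filter; $\mathsf{uSL}_\omega$ those with $F$ a non-empty residually finite upset, i.e. an intersection of sets $h^{-1}[G]$ with $h$ a unital semilattice homomorphism into a finite unital meet semilattice and $G$ an upset there. *)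

(* Defs.v *)
From Stdlib Require Import List FunctionalExtensionality.
Import ListNotations.

Record uSL := {
  car :> Type;
  meet : car -> car -> car;
  one : car;
  meetA : forall x y z, meet x (meet y z) = meet (meet x y) z;
  meetC : forall x y, meet x y = meet y x;
  meetI : forall x, meet x x = x;
  meet1 : forall x, meet x one = x
}.
Arguments meet {u}.
Arguments one {u}.

Definition le {A : uSL} (x y : A) : Prop := meet x y = x.

Definition meets {A : uSL} (l : list A) : A := fold_right meet one l.

Definition upset {A : uSL} (F : A -> Prop) : Prop :=
  forall x y, F x -> le x y -> F y.

Definition is_hom {A B : uSL} (h : A -> B) : Prop :=
  (forall x y, h (meet x y) = meet (h x) (h y)) /\ h one = one.

Definition strict {A B : uSL} (h : A -> B) (F : A -> Prop) (G : B -> Prop) : Prop :=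
  forall x, F x <-> G (h x).

Definition surj {X Y : Type} (f : X -> Y) : Prop := forall y, exists x, f x = y.
Definition inj {X Y : Type} (f : X -> Y) : Prop := forall x y, f x = f y -> x = y.

Section Prod.
Variables (I : Type) (A : I -> uSL).
Definition pmeet (a b : forall i, A i) : forall i, A i := fun i => meet (a i) (b i).
Definition pone : forall i, A i := fun i => one.
Lemma pmeetA a b c : pmeet a (pmeet b c) = pmeet (pmeet a b) c.
Proof. apply functional_extensionality_dep; intro i; apply meetA. Qed.
Lemma pmeetC a b : pmeet a b = pmeet b a.
Proof. apply functional_extensionality_dep; intro i; apply meetC. Qed.
Lemma pmeetI a : pmeet a a = a.
Proof. apply functional_extensionality_dep; intro i; apply meetI. Qed.
Lemma pmeet1 a : pmeet a pone = a.
Proof. apply functional_extensionality_dep; intro i; apply meet1. Qed.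
Definition prod_uSL : uSL :=
  {| car := forall i, A i; meet := pmeet; one := pone;
     meetA := pmeetA; meetC := pmeetC; meetI := pmeetI; meet1 := pmeet1 |}.
End Prod.

Definition cls := forall A : uSL, (A -> Prop) -> Prop.

Definition subclass (K L : cls) : Prop := forall A F, K A F -> L A F.
Definition same_class (K L : cls) : Prop := forall A F, K A F <-> L A F.

Definition ultrafilter {I : Type} (U : (I -> Prop) -> Prop) : Prop :=
  ~ U (fun _ => False) /\
  (forall X Y : I -> Prop, U X -> (forall i, X i -> Y i) -> U Y) /\
  (forall X Y : I -> Prop, U X -> U Y -> U (fun i => X i /\ Y i)) /\
  (forall X : I -> Prop, U X \/ U (fun i => ~ X i)).

Definition logical (K : cls) : Prop :=
  (forall (A B : uSL) F G (h : A -> B), is_hom h -> inj h -> surj h ->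
      strict h F G -> K A F -> K B G) /\
  (* substructures (given by an embedding e : B -> A, with F restricted) *)
  (forall (A B : uSL) F G (e : B -> A), is_hom e -> inj e ->
      strict e G F -> K A F -> K B G) /\
  (forall (I : Type) (A : I -> uSL) (F : forall i, A i -> Prop),
      (forall i, K (A i) (F i)) ->
      K (prod_uSL I A) (fun a => forall i, F i (a i))) /\
  (forall (A B : uSL) F G (h : A -> B), is_hom h -> strict h F G -> K B G -> K A F) /\
  (forall (A B : uSL) F G (h : A -> B), is_hom h -> surj h ->
      strict h F G -> K A F -> K B G).

(** Closure under ultraproducts: <B,G> is (isomorphic to) the ultraproduct of
    the <A i, F i> modulo U, presented by the surjective quotient map q. *)
Definition finitary (K : cls) : Prop :=
  forall (I : Type) (A : I -> uSL) (F : forall i, A i -> Prop)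
         (U : (I -> Prop) -> Prop) (B : uSL) (G : B -> Prop)
         (q : prod_uSL I A -> B),
    ultrafilter U -> (forall i, K (A i) (F i)) ->
    is_hom q -> surj q ->
    (forall a b, q a = q b <-> U (fun i => a i = b i)) ->
    (forall a, G (q a) <-> U (fun i => F i (a i))) ->
    K B G.

Definition trivial_cls (K : cls) : Prop := forall A F, K A F -> forall x, F x.

(** n-filters; finite sets X are given by (non-empty) lists. *)
Definition n_filter (n : nat) {A : uSL} (F : A -> Prop) : Prop :=
  upset F /\
  forall xs : list A, xs <> [] -> (forall x, In x xs -> F x) ->
    (forall ys : list A, ys <> [] -> (forall y, In y ys -> In y xs) ->
       length ys <= n -> F (meets ys)) ->
    F (meets xs).

Definition finite_uSL (B : uSL) : Prop := exists l : list B, forall b, In b l.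

Definition res_finite_upset {A : uSL} (F : A -> Prop) : Prop :=
  exists (J : Type) (B : J -> uSL) (h : forall j, A -> B j) (G : forall j, B j -> Prop),
    (forall j, finite_uSL (B j)) /\ (forall j, is_hom (h j)) /\
    (forall j, upset (G j)) /\
    (forall x, F x <-> forall j, G j (h j x)).

Definition uSL_inf : cls := fun A F => (exists x, F x) /\ upset F.
Definition uSL_n (n : nat) : cls := fun A F => (exists x, F x) /\ n_filter n F.
Definition uSL_omega : cls := fun A F => (exists x, F x) /\ res_finite_upset F.

(* Main.v *)
Require Import Defs.
From Stdlib Require Import List Arith Lia Classical ClassicalEpsilon FunctionalExtensionality PropExtensionality ProofIrrelevance FinFun.
From mathcomp Require boolp classical_sets filter.
Import ListNotations.

Lemma mA {A : uSL} (x y z : A) : meet x (meet y z) = meet (meet x y) z. Proof. apply meetA. Qed.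
Lemma mC {A : uSL} (x y : A) : meet x y = meet y x. Proof. apply meetC. Qed.
Lemma mI {A : uSL} (x : A) : meet x x = x. Proof. apply meetI. Qed.
Lemma m1 {A : uSL} (x : A) : meet x one = x. Proof. apply meet1. Qed.

Lemma le_refl {A : uSL} (x : A) : le x x.
Proof. apply mI. Qed.
Lemma le_one {A : uSL} (x : A) : le x one.
Proof. apply m1. Qed.
Lemma le_antisym {A : uSL} (x y : A) : le x y -> le y x -> x = y.
Proof. unfold le; intros H1 H2. rewrite <- H1. rewrite mC. exact H2. Qed.
Lemma le_trans' {A : uSL} (x y z : A) : le x y -> le y z -> le x z.
Proof. unfold le; intros H1 H2. rewrite <- H1 at 1. rewrite <- mA, H2. exact H1. Qed.
Lemma meet_le_l {A : uSL} (x y : A) : le (meet x y) x.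
Proof. unfold le. rewrite (mC (meet x y) x), mA, mI. reflexivity. Qed.
Lemma meet_le_r {A : uSL} (x y : A) : le (meet x y) y.
Proof. unfold le. rewrite <- mA, mI. reflexivity. Qed.
Lemma le_meet {A : uSL} (x y z : A) : le z x -> le z y -> le z (meet x y).
Proof. unfold le; intros H1 H2. rewrite mA, H1. exact H2. Qed.
Lemma le_meet_iff {A : uSL} (x y z : A) : le z (meet x y) <-> le z x /\ le z y.
Proof. split. intro H; split; eapply le_trans'; eauto using meet_le_l, meet_le_r.
  intros [H1 H2]; apply le_meet; auto. Qed.
Lemma one_meet {A : uSL} (x : A) : meet one x = x.
Proof. rewrite mC; apply m1. Qed.
Lemma meet_swap {A : uSL} (a b c d : A) : meet (meet a b) (meet c d) = meet (meet a c) (meet b d).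
Proof. rewrite <- !mA. f_equal. rewrite !mA. f_equal. apply mC. Qed.

Lemma meets_app {A : uSL} (l1 l2 : list A) : meets (l1 ++ l2) = meet (meets l1) (meets l2).
Proof. induction l1; simpl. rewrite one_meet; reflexivity. rewrite IHl1, mA; reflexivity. Qed.
Lemma meets_le_In {A : uSL} (l : list A) x : In x l -> le (meets l) x.
Proof. induction l; simpl; intros H; [contradiction|]. destruct H as [<-|H].
  apply meet_le_l. eapply le_trans'. apply meet_le_r. auto. Qed.
Lemma le_meets {A : uSL} (l : list A) z : (forall x, In x l -> le z x) -> le z (meets l).
Proof. induction l; simpl; intros H. apply le_one. apply le_meet; auto. Qed.
Lemma meets_incl {A : uSL} (xs ys : list A) : (forall y, In y ys -> In y xs) -> le (meets xs) (meets ys).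
Proof. intros H; apply le_meets; intros; apply meets_le_In; auto. Qed.
Lemma upset_one {A : uSL} (F : A -> Prop) x : upset F -> F x -> F one.
Proof. intros U Fx; apply (U x); auto. apply le_one. Qed.
Lemma upset_meets {A : uSL} (F : A -> Prop) l x : upset F -> F (meets l) -> In x l -> F x.
Proof. intros U H Hx; apply (U _ _ H); apply meets_le_In; auto. Qed.
Lemma hom_meets {A B : uSL} (h : A -> B) l : is_hom h -> h (meets l) = meets (map h l).
Proof. intros [Hm H1]; induction l; simpl; auto. rewrite Hm, IHl; reflexivity. Qed.
Lemma hom_le {A B : uSL} (h : A -> B) x y : is_hom h -> le x y -> le (h x) (h y).
Proof. intros [Hm _] H; unfold le in *. rewrite <- Hm, H; reflexivity. Qed.
Lemma le_one_eq {A : uSL} (x : A) : le one x -> x = one.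
Proof. intros H; apply le_antisym; auto using le_one. Qed.

Lemma lift_map {X Y : Type} (f : X -> Y) (xs : list X) (ys' : list Y) :
  (forall y, In y ys' -> In y (map f xs)) ->
  exists ys, map f ys = ys' /\ (forall y, In y ys -> In y xs).
Proof. induction ys' as [|b ys' IH]; intros H. exists []; simpl; split; auto; tauto.
  destruct IH as [ys [E I]]. intros; apply H; simpl; auto.
  destruct (proj1 (in_map_iff f xs b) (H b (or_introl eq_refl))) as [a [Ea Ia]].
  exists (a :: ys); simpl; split. rewrite Ea, E; auto. intros y [<-|Hy]; auto. Qed.
Lemma lift_surj {X Y : Type} (f : X -> Y) (xs : list Y) : surj f -> exists as_, map f as_ = xs.
Proof. intros S; induction xs as [|b xs IH]. exists []; auto.
  destruct IH as [l E]; destruct (S b) as [a Ea]; exists (a :: l); simpl; rewrite Ea, E; auto. Qed.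

Lemma min_list {T : Type} (P : list T -> Prop) l : P l ->
  exists l0, P l0 /\ forall l', P l' -> length l0 <= length l'.
Proof.
  assert (forall N l, length l = N -> P l -> exists l0, P l0 /\ forall l', P l' -> length l0 <= length l').
  { intro N; induction N as [N IH] using lt_wf_ind; intros l1 E H.
    destruct (classic (exists l', P l' /\ length l' < length l1)) as [[l' [H1 H2]]|Hn].
    - eapply IH; [|reflexivity|exact H1]; lia.
    - exists l1; split; auto. intros l' H'. destruct (le_lt_dec (length l1) (length l')); auto.
      exfalso; apply Hn; eauto. }
  intros; eapply H; eauto.
Qed.
Lemma min_nat (P : nat -> Prop) n : P n -> exists m, P m /\ forall k, P k -> m <= k.
Proof.
  induction n as [n IH] using lt_wf_ind; intros H.
  destruct (classic (exists k, P k /\ k < n)) as [[k [H1 H2]]|Hn]. eapply IH; eauto.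
  exists n; split; auto. intros k Hk. destruct (le_lt_dec n k); auto. exfalso; eauto.
Qed.

Lemma pred_ext {A : uSL} (P Q : A -> Prop) : (forall x, P x <-> Q x) -> P = Q.
Proof. intros H; apply functional_extensionality; intro x; apply propositional_extensionality; auto. Qed.

Lemma filter_prop {T : Type} (P : T -> Prop) (l : list T) : exists gs, forall g, In g gs <-> In g l /\ P g.
Proof. induction l as [|a l [gs IH]]. exists []; simpl; tauto.
  destruct (classic (P a)). exists (a :: gs); simpl; intro g; rewrite IH; split; intuition congruence.
  exists gs; intro g; rewrite IH; simpl; split; intuition congruence. Qed.

Definition bor (a b : nat -> bool) : nat -> bool := fun i => orb (a i) (b i).
Lemma borA a b c : bor a (bor b c) = bor (bor a b) c.
Proof. apply functional_extensionality; intro i; unfold bor; apply Bool.orb_assoc. Qed.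
Lemma borC a b : bor a b = bor b a.
Proof. apply functional_extensionality; intro i; unfold bor; apply Bool.orb_comm. Qed.
Lemma borI a : bor a a = a.
Proof. apply functional_extensionality; intro i; unfold bor; apply Bool.orb_diag. Qed.
Lemma bor1 a : bor a (fun _ => false) = a.
Proof. apply functional_extensionality; intro i; unfold bor; apply Bool.orb_false_r. Qed.
Definition Bs : uSL := {| car := nat -> bool; meet := bor; one := fun _ => false;
  meetA := borA; meetC := borC; meetI := borI; meet1 := bor1 |}.
Definition FB (n : nat) : Bs -> Prop := fun a => exists i, i < n /\ a i = false.

Lemma Bs_meets (l : list Bs) i : meets l i = true <-> exists x, In x l /\ x i = true.
Proof. induction l; simpl. split; [discriminate|intros [x [[] _]]].
  unfold bor; rewrite Bool.orb_true_iff, IHl. split.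
  intros [H|[x [H1 H2]]]; eauto. intros [x [[<-|H1] H2]]; eauto. Qed.

Lemma FB_upset n : upset (FB n).
Proof. intros x y [i [Hi Hx]] Hle. exists i; split; auto.
  unfold le in Hle; simpl in Hle. apply (f_equal (fun f => f i)) in Hle. unfold bor in Hle.
  rewrite Hx in Hle. destruct (y i); auto. Qed.

Lemma B_in_uSLn n : 1 <= n -> uSL_n n Bs (FB n).
Proof.
  intros Hn. split. exists (@one Bs). exists 0; split; auto; lia.
  split. apply FB_upset.
  intros xs Hne Hxs Hprem. apply NNPP; intro Hnot.
  assert (Hall : forall i, i < n -> exists x, In x xs /\ x i = true).
  { intros i Hi. apply Bs_meets. destruct (meets xs i) eqn:E; [reflexivity|]. exfalso; apply Hnot; exists i; auto. }
  assert (forall N, N <= n -> exists ys, length ys = N /\ (forall y, In y ys -> In y xs) /\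
      forall i, i < N -> meets ys i = true).
  { induction N; intros HN. exists []; simpl; repeat split; auto; intros; lia.
    destruct IHN as [ys [E [I M]]]; [lia|]. destruct (Hall N) as [x [Ix Hx]]; [lia|].
    exists (x :: ys); split; [idtac|split]. { simpl; f_equal; exact E. } intros y [<-|H]; auto.
    intros i Hi. unfold bor. apply Bool.orb_true_iff. destruct (Nat.eq_dec i N) as [->|]; auto.
    right; apply M; lia. }
  destruct (H n (le_n n)) as [ys [E [I M]]].
  destruct (Hprem ys) as [i [Hi Hf]]; auto. destruct ys; simpl in E; [lia|discriminate]. lia.
  rewrite M in Hf; auto; discriminate.
Qed.

Definition uvec (j : nat) : Bs := fun i => Nat.eqb i j.

Lemma B_not_nfilter n : 1 <= n -> ~ n_filter n (FB (S n)).
Proof.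
  intros Hn [_ H]. set (xs := map uvec (seq 0 (S n))).
  assert (Hnd : NoDup xs).
  { apply FinFun.Injective_map_NoDup; [|apply seq_NoDup].
    intros j k E. apply (f_equal (fun f => f j)) in E. unfold uvec in E.
    rewrite Nat.eqb_refl in E. symmetry in E. apply Nat.eqb_eq in E; auto. }
  assert (Hin : forall j, j < S n -> In (uvec j) xs).
  { intros j Hj; apply in_map, in_seq; lia. }
  assert (Hxs : forall x, In x xs -> exists j, j < S n /\ x = uvec j).
  { intros x Hx. apply in_map_iff in Hx. destruct Hx as [j [<- Hj]]. apply in_seq in Hj. exists j; split; auto; lia. }
  assert (Hc : FB (S n) (meets xs)).
  { apply H. unfold xs; simpl; discriminate.
    intros x Hx. destruct (Hxs x Hx) as [j [Hj ->]].
    destruct j. exists 1; split; [lia|reflexivity]. exists 0; split; [lia|reflexivity].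
    intros ys Hne Hinc Hlen. apply NNPP; intro Hnot.
    assert (incl xs ys).
    { intros x Hx. destruct (Hxs x Hx) as [j [Hj ->]].
      assert (meets ys j = true). { destruct (meets ys j) eqn:E; [reflexivity|]. exfalso; apply Hnot; exists j; auto. }
      apply Bs_meets in H0. destruct H0 as [y [Iy Ey]]. destruct (Hxs y (Hinc y Iy)) as [k [Hk ->]].
      unfold uvec in Ey. apply Nat.eqb_eq in Ey. subst; auto. }
    pose proof (NoDup_incl_length Hnd H0). unfold xs in H1. rewrite length_map, length_seq in H1. lia. }
  destruct Hc as [i [Hi Hf]].
  assert (meets xs i = true). { apply Bs_meets. exists (uvec i); split; auto. unfold uvec; apply Nat.eqb_refl. }
  congruence.
Qed.

Lemma lemU (K : cls) (A : uSL) (gs : list A) : logical K -> gs <> [] ->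
  K Bs (FB (length gs)) -> K A (fun y => exists g, In g gs /\ le g y).
Proof.
  intros HK Hne HB. destruct HK as [_ [_ [_ [Hpre _]]]].
  set (h := fun (y : A) => (fun i => if excluded_middle_informative (le (nth i gs one) y) then false else true) : Bs).
  apply (Hpre A Bs _ (FB (length gs)) h); auto.
  - split.
    + intros x y; apply functional_extensionality; intro i; unfold h; simpl; unfold bor.
      destruct (excluded_middle_informative (le (nth i gs one) (meet x y))) as [H|H];
      destruct (excluded_middle_informative (le (nth i gs one) x)) as [H1|H1];
      destruct (excluded_middle_informative (le (nth i gs one) y)) as [H2|H2]; auto;
      rewrite le_meet_iff in H; tauto.
    + apply functional_extensionality; intro i; unfold h; simpl.
      destruct (excluded_middle_informative (le (nth i gs one) one)) as [H|H]; auto.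
      exfalso; apply H, le_one.
  - intros y; split.
    + intros [g [Ig Hg]]. destruct (In_nth gs g one Ig) as [i [Hi E]]. exists i; split; auto.
      unfold h. destruct (excluded_middle_informative (le (nth i gs one) y)); auto. rewrite E in n; tauto.
    + intros [i [Hi Hf]]. unfold h in Hf. destruct (excluded_middle_informative (le (nth i gs one) y)); [|discriminate].
      exists (nth i gs one); split; auto. apply nth_In; auto.
Qed.

Lemma lemL1 (K : cls) : logical K -> ~ trivial_cls K -> subclass K uSL_inf -> K Bs (FB 1).
Proof.
  intros HK Hnt Hsub. destruct HK as [_ [_ [_ [Hpre _]]]].
  assert (exists A F a, K A F /\ ~ F a) as [A [F [a [HAF Ha]]]].
  { apply NNPP; intro H. apply Hnt; intros A F HAF x. apply NNPP; intro Hx. apply H; eauto. }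
  destruct (Hsub A F HAF) as [[x0 Fx0] Hup].
  set (h := fun (U : Bs) => if U 0 then a else (one : A)).
  apply (Hpre Bs A (FB 1) F h); auto.
  - split. intros U V; unfold h; simpl; unfold bor.
    destruct (U 0), (V 0); simpl; rewrite ?mI, ?m1, ?one_meet; auto. reflexivity.
  - intro U; unfold h. split.
    + intros [i [Hi Hf]]. assert (i = 0) by lia; subst. rewrite Hf. eapply upset_one; eauto.
    + destruct (U 0) eqn:E; intro H. contradiction. exists 0; split; auto.
Qed.

Lemma meets_map_meet {A : uSL} {T : Type} (f g : T -> A) (L : list T) :
  meets (map (fun i => meet (f i) (g i)) L) = meet (meets (map f L)) (meets (map g L)).
Proof. induction L; simpl. symmetry; apply m1. rewrite IHL. apply meet_swap. Qed.
Lemma meets_map_one {A : uSL} {T : Type} (L : list T) : meets (map (fun _ => @one A) L) = one.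
Proof. induction L; simpl; auto. rewrite IHL; apply m1. Qed.
Lemma cond_filter {A : uSL} {T : Type} (U : T -> bool) (f : T -> A) (L : list T) :
  meets (map (fun i => if U i then f i else one) L) = meets (map f (filter U L)).
Proof. induction L; simpl; auto. destruct (U a); simpl; rewrite IHL; auto. apply one_meet. Qed.
Lemma filter_lt {T : Type} (U : T -> bool) (L : list T) :
  (exists i, In i L /\ U i = false) -> length (filter U L) < length L.
Proof. induction L; simpl; intros [i [Hi Hf]]. destruct Hi.
  destruct Hi as [<-|Hi]. rewrite Hf. pose proof (filter_length_le U L). lia.
  destruct (U a); simpl. assert (length (filter U L) < length L) by eauto. lia.
  pose proof (filter_length_le U L). lia. Qed.
Lemma map_seq_gen {T : Type} (l : list T) d : forall f : nat -> T,
  (forall i, i < length l -> f i = nth i l d) -> map f (seq 0 (length l)) = l.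
Proof. induction l as [|a l IH]; intros f Hf; simpl; auto.
  rewrite <- seq_shift, map_map. f_equal. apply (Hf 0); simpl; lia.
  apply IH. intros i Hi. apply (Hf (S i)); simpl; lia. Qed.
Lemma map_nth_seq {T : Type} (l : list T) d : map (fun i => nth i l d) (seq 0 (length l)) = l.
Proof. apply map_seq_gen with (d := d); auto. Qed.

Lemma not_nfilter {A : uSL} (F : A -> Prop) m : upset F -> ~ n_filter m F ->
  exists xs, xs <> [] /\ (forall x, In x xs -> F x) /\
   (forall ys, ys <> [] -> (forall y, In y ys -> In y xs) -> length ys <= m -> F (meets ys)) /\
   ~ F (meets xs).
Proof. intros Hu Hn. apply NNPP; intro H. apply Hn; split; auto.
  intros xs H1 H2 H3. apply NNPP; intro H4. apply H; exists xs; auto. Qed.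

Lemma lemW (K : cls) (A : uSL) (F : A -> Prop) m : logical K -> subclass K uSL_inf -> K A F ->
  ~ n_filter m F -> exists c, m < c /\ K Bs (FB c).
Proof.
  intros HK Hsub HAF Hnf. destruct (Hsub A F HAF) as [[x0 Fx0] Hup].
  destruct HK as [_ [_ [_ [Hpre _]]]].
  destruct (not_nfilter F m Hup Hnf) as [xs [Hne [Hxs [Hprem Hnot]]]].
  destruct (min_list (fun zs => (forall y, In y zs -> In y xs) /\ ~ F (meets zs)) xs) as [zs [[Hz1 Hz2] Hmin]].
  { split; auto. }
  assert (Hone : F one) by (eapply upset_one; eauto).
  assert (Hzne : zs <> []) by (intro E; subst; simpl in Hz2; auto).
  exists (length zs). split.
  { destruct (le_lt_dec (length zs) m); auto. exfalso; apply Hz2; apply Hprem; auto. }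
  set (c := length zs).
  set (hz := fun (U : Bs) => meets (map (fun i => if U i then nth i zs one else one) (seq 0 c))).
  apply (Hpre Bs A (FB c) F hz); auto.
  - split.
    + intros U V. unfold hz. rewrite <- meets_map_meet. f_equal. apply map_ext; intro i.
      simpl; unfold bor. destruct (U i), (V i); simpl; rewrite ?mI, ?m1, ?one_meet; auto.
    + unfold hz; simpl. apply meets_map_one.
  - intros U. split.
    + intros [i [Hi Hf]]. unfold hz. rewrite cond_filter.
      set (ws := map (fun i => nth i zs one) (filter U (seq 0 c))).
      assert (Hlt : length ws < length zs).
      { unfold ws. rewrite length_map. fold c. rewrite <- (length_seq c 0) at 2. apply filter_lt.
        exists i; split; auto. apply in_seq; lia. }
      apply NNPP; intro Hw. specialize (Hmin ws). assert (length zs <= length ws); [|lia].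
      apply Hmin; split; auto. intros y Hy. unfold ws in Hy. apply in_map_iff in Hy.
      destruct Hy as [j [<- Hj]]. apply filter_In in Hj. destruct Hj as [Hj _]. apply in_seq in Hj.
      apply Hz1, nth_In; unfold c in Hj; lia.
    + intros HF. apply NNPP; intro HnB. apply Hz2.
      assert (E : hz U = meets zs).
      { unfold hz. transitivity (meets (map (fun i => nth i zs one) (seq 0 c))).
        2: { unfold c; rewrite map_nth_seq; auto. } f_equal. apply map_ext_in.
        intros i Hi. apply in_seq in Hi. destruct (U i) eqn:E; auto. exfalso; apply HnB; exists i; split; auto; lia. }
      rewrite <- E; auto.
Qed.

Definition Cset (A : uSL) := {p : A * (A -> Prop) | exists l, (forall y, snd p y <-> In y l) /\ fst p = meets l}.

Definition cmeet {A : uSL} (p q : Cset A) : Cset A.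
Proof.
  refine (exist _ (meet (fst (proj1_sig p)) (fst (proj1_sig q)), fun y => snd (proj1_sig p) y \/ snd (proj1_sig q) y) _).
  destruct p as [[x Z] [l1 [H1 E1]]], q as [[x' Z'] [l2 [H2 E2]]]; simpl in *. exists (l1 ++ l2). split.
  intro y; rewrite in_app_iff, H1, H2; tauto. rewrite meets_app, E1, E2; auto.
Defined.
Definition cone (A : uSL) : Cset A.
Proof. refine (exist _ (one, fun _ => False) _). exists []; simpl; split; auto; tauto. Defined.

Lemma Ceq {A : uSL} (p q : Cset A) : fst (proj1_sig p) = fst (proj1_sig q) ->
  (forall y, snd (proj1_sig p) y <-> snd (proj1_sig q) y) -> p = q.
Proof. destruct p as [[x Z] Hp], q as [[x' Z'] Hq]; simpl; intros -> HZ.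
  assert (Z = Z') as <-. { apply functional_extensionality; intro y; apply propositional_extensionality; auto. }
  f_equal; apply proof_irrelevance. Qed.

Lemma cmeetA {A : uSL} (p q r : Cset A) : cmeet p (cmeet q r) = cmeet (cmeet p q) r.
Proof. apply Ceq; simpl. apply mA. tauto. Qed.
Lemma cmeetC {A : uSL} (p q : Cset A) : cmeet p q = cmeet q p.
Proof. apply Ceq; simpl. apply mC. tauto. Qed.
Lemma cmeetI {A : uSL} (p : Cset A) : cmeet p p = p.
Proof. apply Ceq; simpl. apply mI. tauto. Qed.
Lemma cmeet1 {A : uSL} (p : Cset A) : cmeet p (cone A) = p.
Proof. apply Ceq; simpl. apply m1. tauto. Qed.

Definition Cu (A : uSL) : uSL := {| car := Cset A; meet := cmeet; one := cone A;
  meetA := cmeetA; meetC := cmeetC; meetI := cmeetI; meet1 := cmeet1 |}.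

Lemma C_elems {A : uSL} (G : A -> Prop) (c : Cset A) : upset G -> G (fst (proj1_sig c)) ->
  forall y, snd (proj1_sig c) y -> G y.
Proof. destruct c as [[x Z] [l [H E]]]; simpl in *; intros Hu Hx y Hy. subst x.
  eapply upset_meets; eauto. apply H; auto. Qed.

Lemma sel_exists {A : uSL} (G : A -> Prop) n : 1 <= n -> G one -> n_filter n G ->
  forall w : Cset A, exists S : nat -> A -> Prop,
  (forall c : Cset A, G (fst (proj1_sig c)) -> exists i, i < n /\ forall y, snd (proj1_sig c) y -> S i y) /\
  (~ G (fst (proj1_sig w)) -> forall i, i < n -> ~ (forall y, snd (proj1_sig w) y -> S i y)).
Proof.
  intros Hn Hone [Hup Hnf] w.
  destruct (classic (G (fst (proj1_sig w)))) as [Hw|Hw].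
  { exists (fun _ _ => True); split. intros; exists 0; split; auto. tauto. }
  destruct w as [[x Z] [l [HZ Ex]]]; simpl in *.
  destruct (classic (forall y, In y l -> G y)) as [Hall|Hnall].
  -
    assert (Hex : exists ys, ys <> [] /\ (forall y, In y ys -> In y l) /\ length ys <= n /\ ~ G (meets ys)).
    { apply NNPP; intro Hc. apply Hw. subst x. apply Hnf; auto.
      intro E; subst l; simpl in *; auto.
      intros ys H1 H2 H3. apply NNPP; intro H4. apply Hc; eauto. }
    destruct Hex as [ys [Hyne [Hyl [Hylen Hyg]]]].
    set (d := nth 0 ys one).
    exists (fun i y => G y /\ y <> nth i ys d). split.
    + intros c Hc. apply NNPP; intro Hno.
      assert (Hinc : forall y, In y ys -> snd (proj1_sig c) y).
      { intros y Hy. destruct (In_nth ys y d Hy) as [i [Hi Ei]].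
        assert (~ (forall y, snd (proj1_sig c) y -> G y /\ y <> nth i ys d)) as Hni.
        { intro H; apply Hno; exists i; split; auto; lia. }
        apply NNPP; intro Hy'. apply Hni; intros y' Hy'2. split. eapply C_elems; eauto.
        intro E; subst y'. rewrite Ei in Hy'2. auto. }
      apply Hyg. apply (Hup (fst (proj1_sig c))); auto.
      destruct c as [[xc Zc] [lc [HZc Exc]]]; simpl in *. subst xc. apply meets_incl.
      intros y Hy; apply HZc, Hinc; auto.
    + intros _ i Hi Hsub.
      assert (Ht : In (nth i ys d) ys).
      { destruct (lt_dec i (length ys)). apply nth_In; auto. rewrite nth_overflow by lia.
        unfold d; apply nth_In. destruct ys; [congruence|simpl; lia]. }
      destruct (Hsub (nth i ys d)) as [_ Hc]. apply HZ, Hyl; auto. apply Hc; auto.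
  - apply not_all_ex_not in Hnall. destruct Hnall as [y0 Hy0].
    exists (fun _ => G). split.
    + intros c Hc. exists 0; split; [lia|]. eapply C_elems; eauto.
    + intros _ i Hi Hsub. apply Hy0; intro Hin. apply Hsub, HZ; auto.
Qed.

Definition hwf {A : uSL} (S : nat -> A -> Prop) (c : Cset A) : Bs :=
  fun i => if excluded_middle_informative (forall y, snd (proj1_sig c) y -> S i y) then false else true.
Lemma hwf_hom {A : uSL} (S : nat -> A -> Prop) : is_hom (A := Cu A) (B := Bs) (hwf S).
Proof.
  split.
  - intros c d. apply functional_extensionality; intro i. unfold hwf; simpl; unfold bor.
    destruct (excluded_middle_informative _) as [H0|H0];
    destruct (excluded_middle_informative _) as [H1|H1];
    destruct (excluded_middle_informative _) as [H2|H2];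
    simpl in *; auto; exfalso; firstorder.
  - apply functional_extensionality; intro i. unfold hwf; simpl.
    destruct (excluded_middle_informative (forall y, False -> S i y)) as [H0|H0]; auto.
    exfalso; apply H0; tauto.
Qed.

Lemma lemG (K : cls) n : logical K -> 1 <= n -> K Bs (FB n) -> subclass (uSL_n n) K.
Proof.
  intros HK Hn HB A G [[x0 Gx0] HG].
  destruct HK as [_ [_ [Hprod [Hpre Himg]]]].
  assert (Gone : G one) by (eapply upset_one; [apply HG|eauto]).
  pose (spec := sel_exists G n Hn Gone HG).
  set (Sel := fun w => proj1_sig (constructive_indefinite_description _ (spec w))).
  assert (HS : forall w, (forall c : Cset A, G (fst (proj1_sig c)) -> exists i, i < n /\ forall y, snd (proj1_sig c) y -> Sel w i y) /\
    (~ G (fst (proj1_sig w)) -> forall i, i < n -> ~ (forall y, snd (proj1_sig w) y -> Sel w i y))).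
  { intro w. unfold Sel. exact (proj2_sig (constructive_indefinite_description _ (spec w))). }
  set (H := fun (c : Cu A) => (fun w => hwf (Sel w) c) : prod_uSL (Cset A) (fun _ => Bs)).
  set (FC := fun (c : Cu A) => G (fst (proj1_sig c))).
  assert (KC : K (Cu A) FC).
  { apply (Hpre (Cu A) (prod_uSL (Cset A) (fun _ => Bs)) FC (fun a => forall w, FB n (a w)) H).
    - split.
      + intros c d. apply functional_extensionality_dep; intro w. unfold H.
        exact (proj1 (hwf_hom (Sel w)) c d).
      + apply functional_extensionality_dep; intro w. unfold H. exact (proj2 (hwf_hom (Sel w))).
    - intros c; split.
      + intros Hc w. destruct (proj1 (HS w) c Hc) as [i [Hi Hsub]]. exists i; split; auto.
        unfold H, hwf. destruct (excluded_middle_informative _); auto. contradiction.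
      + intros Hall. apply NNPP; intro Hc. destruct (Hall c) as [i [Hi Hf]].
        unfold H, hwf in Hf. destruct (excluded_middle_informative _) as [Hs|]; [|discriminate].
        exact (proj2 (HS c) Hc i Hi Hs).
    - apply (Hprod (Cset A) (fun _ => Bs) (fun _ => FB n)). intros _; exact HB. }
  apply (Himg (Cu A) A FC G (fun c => fst (proj1_sig c))); auto.
  - split; reflexivity.
  - intro y. assert (Hp : exists l, (forall z, snd (y, fun z => z = y) z <-> In z l) /\ fst (y, fun z : A => z = y) = meets l).
    { exists [y]; simpl; split. intro z; split; [intros ->; auto|intros [->|[]]; auto]. symmetry; apply m1. }
    exists (exist _ (y, fun z => z = y) Hp). reflexivity.
  - intro c; unfold FC; tauto.
Qed.

Lemma nfilter_mono {A : uSL} (F : A -> Prop) n n' : n <= n' -> n_filter n F -> n_filter n' F.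
Proof. intros Hle [Hu Hf]; split; auto. intros xs H1 H2 H3. apply Hf; auto.
  intros ys Y1 Y2 Y3; apply H3; auto; lia. Qed.

Lemma lemStep (K : cls) m : logical K -> subclass K uSL_inf -> ~ subclass K (uSL_n m) ->
  subclass (uSL_n (S m)) K.
Proof.
  intros HK Hsub Hns.
  assert (exists A F, K A F /\ ~ uSL_n m A F) as [A [F [HAF HnF]]].
  { apply NNPP; intro H; apply Hns; intros A F HAF; apply NNPP; intro H'; apply H; eauto. }
  destruct (Hsub A F HAF) as [Hne Hup].
  assert (~ n_filter m F) as Hnf by (intro H; apply HnF; split; auto).
  destruct (lemW K A F m HK Hsub HAF Hnf) as [c [Hc HB]].
  intros B G [HGne HG]. apply (lemG K c HK); [lia|exact HB|]. split; auto.
  eapply nfilter_mono; [|exact HG]; lia.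
Qed.

Lemma main1 (K : cls) : logical K -> ~ trivial_cls K -> subclass K uSL_inf ->
  (forall n, 1 <= n -> subclass (uSL_n n) K) \/ exists n, 1 <= n /\ same_class K (uSL_n n).
Proof.
  intros HK Hnt Hsub.
  assert (H1 : subclass (uSL_n 1) K) by (apply (lemG K 1 HK); [lia|apply lemL1; auto]).
  destruct (classic (exists n, 1 <= n /\ subclass K (uSL_n n))) as [[n0 Hn0]|Hno].
  - destruct (min_nat (fun n => 1 <= n /\ subclass K (uSL_n n)) n0 Hn0) as [n [[Hn HKn] Hmin]].
    right; exists n; split; auto. intros A F; split; [apply HKn|].
    destruct n as [|m]; [lia|]. destruct m as [|m]; [apply H1|].
    apply (lemStep K (S m) HK Hsub). intro Hs. assert (Hm1 : 1 <= S m) by lia. specialize (Hmin (S m) (conj Hm1 Hs)). lia.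
  - left. intros n Hn. destruct n as [|m]; [lia|]. destruct m as [|m]; [exact H1|].
    apply (lemStep K (S m) HK Hsub). intro Hs; apply Hno; exists (S m); split; auto; lia.
Qed.

Lemma lemOmega (K : cls) : logical K -> (forall n, 1 <= n -> subclass (uSL_n n) K) -> subclass uSL_omega K.
Proof.
  intros HK Hall A F [[x0 Fx0] [J [B [h [G [Hfin [Hhom [Hup Heq]]]]]]]].
  assert (KB : forall j, K (B j) (G j)).
  { intro j. destruct (Hfin j) as [l Hl]. destruct (filter_prop (G j) l) as [gs Hgs].
    assert (Hin : In (h j x0) gs) by (apply Hgs; split; auto; apply Heq; auto).
    assert (Hne : gs <> []) by (intro E; rewrite E in Hin; destruct Hin).
    assert (HB : K Bs (FB (length gs))).
    { apply (Hall (length gs)). destruct gs; [congruence|simpl; lia]. apply B_in_uSLn. destruct gs; [congruence|simpl; lia]. }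
    pose proof (lemU K (B j) gs HK Hne HB) as H.
    replace (G j) with (fun y => exists g, In g gs /\ le g y); auto.
    apply pred_ext. intro y; split.
    - intros [g [Hg Hle]]. apply (Hup j g y); auto. apply Hgs; auto.
    - intros Hy. exists y; split; [apply Hgs; split; auto|apply le_refl]. }
  destruct HK as [_ [_ [Hprod [Hpre _]]]].
  apply (Hpre A (prod_uSL J B) F (fun a => forall j, G j (a j)) (fun x j => h j x)).
  - split. intros x y; apply functional_extensionality_dep; intro j; apply (proj1 (Hhom j)).
    apply functional_extensionality_dep; intro j; apply (proj2 (Hhom j)).
  - intro x; apply Heq.
  - apply Hprod; auto.
Qed.

Lemma U_up {I : Type} (U : (I -> Prop) -> Prop) X Y : ultrafilter U -> U X -> (forall i, X i -> Y i) -> U Y.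
Proof. intros [_ [H _]]; eauto. Qed.
Lemma U_and {I : Type} (U : (I -> Prop) -> Prop) X Y : ultrafilter U -> U X -> U Y -> U (fun i => X i /\ Y i).
Proof. intros [_ [_ [H _]]]; eauto. Qed.
Lemma U_full {I : Type} (U : (I -> Prop) -> Prop) : ultrafilter U -> U (fun _ => True).
Proof. intros HU. destruct HU as [H0 [H1 [H2 H3]]]. destruct (H3 (fun _ => False)) as [H|H]. contradiction.
  eapply H1; eauto. Qed.
Lemma U_forall_list {I T : Type} (U : (I -> Prop) -> Prop) (L : list T) (S : T -> I -> Prop) :
  ultrafilter U -> (forall t, In t L -> U (S t)) -> U (fun i => forall t, In t L -> S t i).
Proof. intros HU; induction L as [|a L IH]; intros H.
  apply (U_up U (fun _ => True)); auto. apply U_full; auto. simpl; tauto.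
  eapply U_up; [exact HU|apply (U_and U (S a) (fun i => forall t, In t L -> S t i) HU)|].
  apply H; simpl; auto. apply IH; intros; apply H; simpl; auto.
  intros i [Ha Hb] t [<-|Ht]; auto. Qed.

Definition Rq (I : Type) (A : I -> uSL) (U : (I -> Prop) -> Prop) (a b : forall i, A i) : Prop :=
  U (fun i => a i = b i).
Definition Qset (I : Type) (A : I -> uSL) (U : (I -> Prop) -> Prop) :=
  {S : (forall i, A i) -> Prop | exists a, S = Rq I A U a}.
Definition qcls {I : Type} {A : I -> uSL} {U : (I -> Prop) -> Prop} (a : forall i, A i) : Qset I A U :=
  exist _ (Rq I A U a) (ex_intro _ a eq_refl).
Definition qrep {I : Type} {A : I -> uSL} {U : (I -> Prop) -> Prop} (s : Qset I A U) : forall i, A i :=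
  proj1_sig (constructive_indefinite_description _ (proj2_sig s)).
Lemma qrep_spec {I : Type} {A : I -> uSL} {U : (I -> Prop) -> Prop} (s : Qset I A U) :
  proj1_sig s = Rq I A U (qrep s).
Proof. unfold qrep. exact (proj2_sig (constructive_indefinite_description _ (proj2_sig s))). Qed.
Definition qmeet {I : Type} {A : I -> uSL} {U : (I -> Prop) -> Prop} (s t : Qset I A U) : Qset I A U :=
  qcls (pmeet I A (qrep s) (qrep t)).
Definition qone {I : Type} {A : I -> uSL} {U : (I -> Prop) -> Prop} : Qset I A U := qcls (pone I A).

Lemma sig_ext {T : Type} (P : T -> Prop) (x y : T) (px : P x) (py : P y) : x = y -> exist P x px = exist P y py.
Proof. intros ->; f_equal; apply proof_irrelevance. Qed.




Lemma Rq_refl {I : Type} {A : I -> uSL} {U : (I -> Prop) -> Prop} (HU : ultrafilter U) a : Rq I A U a a.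
Proof. unfold Rq; apply (U_up U (fun _ => True)); auto. apply U_full; auto. Qed.
Lemma Rq_sym {I : Type} {A : I -> uSL} {U : (I -> Prop) -> Prop} (HU : ultrafilter U) a b : Rq I A U a b -> Rq I A U b a.
Proof. unfold Rq; intros H; eapply U_up; eauto. Qed.
Lemma Rq_trans {I : Type} {A : I -> uSL} {U : (I -> Prop) -> Prop} (HU : ultrafilter U) a b c :
  Rq I A U a b -> Rq I A U b c -> Rq I A U a c.
Proof. unfold Rq; intros H1 H2. eapply U_up; [exact HU|apply (U_and _ _ _ HU H1 H2)|]. intros i [-> ->]; auto. Qed.

Lemma qcls_eq {I : Type} {A : I -> uSL} {U : (I -> Prop) -> Prop} (HU : ultrafilter U) a b :
  @qcls I A U a = qcls b <-> Rq I A U a b.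
Proof. split.
  - intro E. apply (f_equal (@proj1_sig _ _)) in E. simpl in E.
    rewrite E. apply Rq_refl; auto.
  - intro H. unfold qcls. apply sig_ext. apply functional_extensionality; intro c.
    apply propositional_extensionality; split; intro H'.
    eapply Rq_trans; eauto. apply Rq_sym; auto. eapply Rq_trans; eauto.
Qed.
Lemma qcls_rep {I : Type} {A : I -> uSL} {U : (I -> Prop) -> Prop} (s : Qset I A U) : qcls (qrep s) = s.
Proof. pose proof (qrep_spec s) as E. destruct s as [S p]. unfold qcls. apply sig_ext. simpl in E; auto. Qed.
Lemma Rq_rep {I : Type} {A : I -> uSL} {U : (I -> Prop) -> Prop} (HU : ultrafilter U) a :
  Rq I A U (qrep (@qcls I A U a)) a.
Proof. apply (proj1 (qcls_eq HU _ _)). rewrite qcls_rep; auto. Qed.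
Lemma qmeet_cls {I : Type} {A : I -> uSL} {U : (I -> Prop) -> Prop} (HU : ultrafilter U) a b :
  qmeet (@qcls I A U a) (qcls b) = qcls (pmeet I A a b).
Proof. unfold qmeet. apply qcls_eq; auto. pose proof (Rq_rep HU a) as H1. pose proof (Rq_rep (A := A) HU b) as H2.
  unfold Rq in *. eapply U_up; [exact HU|apply (U_and _ _ _ HU H1 H2)|]. intros i [E1 E2]. unfold pmeet. rewrite E1, E2; auto. Qed.
Lemma qcls_surj {I : Type} {A : I -> uSL} {U : (I -> Prop) -> Prop} (s : Qset I A U) : exists a, s = qcls a.
Proof. exists (qrep s); symmetry; apply qcls_rep. Qed.

Lemma ultra_quot (I : Type) (A : I -> uSL) (U : (I -> Prop) -> Prop) : ultrafilter U ->
  exists (B : uSL) (q : prod_uSL I A -> B), is_hom q /\ surj q /\ forall a b, q a = q b <-> U (fun i => a i = b i).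
Proof.
  intros HU.
  assert (qA : forall s t u : Qset I A U, qmeet s (qmeet t u) = qmeet (qmeet s t) u).
  { intros s t u. destruct (qcls_surj s) as [a ->], (qcls_surj t) as [b ->], (qcls_surj u) as [c ->].
    rewrite !qmeet_cls by auto. f_equal. apply pmeetA. }
  assert (qC : forall s t : Qset I A U, qmeet s t = qmeet t s).
  { intros s t. destruct (qcls_surj s) as [a ->], (qcls_surj t) as [b ->].
    rewrite !qmeet_cls by auto. f_equal. apply pmeetC. }
  assert (qI : forall s : Qset I A U, qmeet s s = s).
  { intros s. destruct (qcls_surj s) as [a ->]. rewrite !qmeet_cls by auto. f_equal. apply pmeetI. }
  assert (q1 : forall s : Qset I A U, qmeet s qone = s).
  { intros s. destruct (qcls_surj s) as [a ->]. unfold qone. rewrite !qmeet_cls by auto. f_equal. apply pmeet1. }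
  exists {| car := Qset I A U; meet := qmeet; one := qone; meetA := qA; meetC := qC; meetI := qI; meet1 := q1 |}.
  exists qcls. split; [split|split].
  - intros a b; simpl. symmetry; apply qmeet_cls; auto.
  - reflexivity.
  - intro s; destruct (qcls_surj s) as [a ->]; eauto.
  - intros a b; apply qcls_eq; auto.
Qed.
Module UF.
Import mathcomp.classical.classical_sets mathcomp.classical.filter.
Lemma ultra_exists (T : Type) (F0 : (T -> Prop) -> Prop) :
  F0 (fun _ => True) ->
  (forall X Y, F0 X -> F0 Y -> F0 (fun i => X i /\ Y i)) ->
  (forall X Y, F0 X -> (forall i, X i -> Y i) -> F0 Y) ->
  ~ F0 (fun _ => False) ->
  exists U, ultrafilter U /\ forall X, F0 X -> U X.
Proof.
intros HT HI HS H0.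
assert (PF : ProperFilter F0).
{ constructor. exact H0. constructor. exact HT.
  intros A B. exact (HI A B). intros P Q HPQ HP. exact (HS P Q HP HPQ). }
destruct (ultraFilterLemma PF) as [G [UG sub]].
exists G. split; [|exact sub].
pose proof (@ultra_proper _ _ UG) as PG.
split; [|split; [|split]].
- exact (@filter_not_empty _ _ PG).
- intros X Y GX HXY. exact (@filterS _ _ (@filter_filter _ _ PG) X Y HXY GX).
- intros X Y GX GY. exact (@filterI _ _ (@filter_filter _ _ PG) X Y GX GY).
- intros X. exact (in_ultra_setVsetC X UG).
Qed.
End UF.

Lemma lemInf (K : cls) : logical K -> finitary K -> (forall n, 1 <= n -> subclass (uSL_n n) K) ->
  subclass uSL_inf K.
Proof.
  intros HK Hfin Hall A F [[x0 Fx0] Hup].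
  assert (Fone : F one) by (eapply upset_one; eauto).
  set (Fl := fun (l : list A) (y : A) => exists g, (g = one \/ (In g l /\ F g)) /\ le g y).
  assert (KFl : forall l, K A (Fl l)).
  { intro l. destruct (filter_prop F l) as [gs0 Hgs0]. set (gs := one :: gs0).
    assert (Hne : gs <> []) by discriminate.
    assert (HB : K Bs (FB (length gs))).
    { apply (Hall (length gs)). simpl; lia. apply B_in_uSLn. simpl; lia. }
    pose proof (lemU K A gs HK Hne HB) as H.
    replace (Fl l) with (fun y => exists g, In g gs /\ le g y); auto.
    apply pred_ext. intro y; unfold Fl, gs; simpl; split.
    - intros [g [[E|Hg] Hle]]; exists g; split; auto. right; apply Hgs0; auto.
    - intros [g [[E|Hg] Hle]]; exists g; split; auto. right; apply Hgs0; auto. }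
  destruct (UF.ultra_exists (list A) (fun S => exists l, forall l', incl l l' -> S l')) as [U [HU Hcone]].
  { exists []; auto. }
  { intros X Y [l1 H1] [l2 H2]. exists (l1 ++ l2). intros l' Hl; split.
    apply H1; intros z Hz; apply Hl, in_app_iff; auto. apply H2; intros z Hz; apply Hl, in_app_iff; auto. }
  { intros X Y [l H] HXY; exists l; auto. }
  { intros [l H]. apply (H l). apply incl_refl. }
  destruct (ultra_quot (list A) (fun _ => A) U HU) as [B [q [Hq [Hsu Hker]]]].
  set (G := fun y : B => exists a, q a = y /\ U (fun i => Fl i (a i))).
  assert (HG : forall a, G (q a) <-> U (fun i => Fl i (a i))).
  { intro a; split.
    - intros [a' [E Ha']]. apply Hker in E. eapply U_up; [exact HU|apply (U_and _ _ _ HU Ha' E)|].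
      intros i [H1 <-]; auto.
    - intro H; exists a; auto. }
  assert (KBG : K B G) by (apply (Hfin (list A) (fun _ => A) (fun i => Fl i) U B G q); auto).
  destruct HK as [_ [_ [_ [Hpre _]]]].
  apply (Hpre A B F G (fun x => q (fun _ => x))); auto.
  - destruct Hq as [Hqm Hq1]. split. intros x y. apply (Hqm (fun _ => x) (fun _ => y)). apply Hq1.
  - intro x; rewrite HG; split.
    + intro Fx. apply (U_up U (fun l => In x l)); auto.
      apply Hcone. exists [x]. intros l' Hl; apply Hl; simpl; auto.
      intros l Hl. exists x; split; auto. apply le_refl.
    + intro H. apply NNPP; intro Fx. pose proof HU as [H0 _]. apply H0.
      apply (U_up U (fun i => Fl i x)); auto.
      unfold Fl; intros i [g [[->|[_ Hg]] Hle]]; apply Fx.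
      apply le_one_eq in Hle; subst; auto. apply (Hup g); auto.
Qed.

Lemma P_pre n (A B : uSL) F G (h : A -> B) : is_hom h -> strict h F G -> uSL_n n B G -> uSL_n n A F.
Proof.
  intros Hh Hs [[y0 Gy0] [Hup Hnf]].
  split. exists one. apply Hs. rewrite (proj2 Hh). eapply upset_one; eauto.
  split. intros x y Fx Hle. apply Hs. apply Hs in Fx. apply (Hup _ _ Fx). apply hom_le; auto.
  intros xs Hne Hxs Hprem. apply Hs. rewrite hom_meets by auto. apply Hnf.
  - destruct xs; [congruence|discriminate].
  - intros y Hy. apply in_map_iff in Hy. destruct Hy as [x [<- Hx]]. apply Hs; auto.
  - intros ys' Hne' Hinc Hlen. destruct (lift_map h xs ys' Hinc) as [ys [E Hi]]. subst ys'.
    rewrite <- hom_meets by auto. apply Hs. rewrite length_map in Hlen. apply Hprem; auto.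
    intro E; subst; simpl in Hne'; congruence.
Qed.

Lemma P_img n (A B : uSL) F G (h : A -> B) : is_hom h -> surj h -> strict h F G -> uSL_n n A F -> uSL_n n B G.
Proof.
  intros Hh Hsu Hs [[x0 Fx0] [Hup Hnf]].
  split. exists (h x0). apply Hs; auto.
  split.
  - intros x y Gx Hle. destruct (Hsu x) as [a <-], (Hsu y) as [b <-].
    apply Hs. apply Hs in Gx.
    assert (F (meet a b)). { apply Hs. rewrite (proj1 Hh). unfold le in Hle. rewrite Hle. apply Hs; auto. }
    apply (Hup (meet a b)); auto. apply meet_le_r.
  - intros xs Hne Hxs Hprem. destruct (lift_surj h xs Hsu) as [as_ <-].
    rewrite <- hom_meets by auto. apply Hs. apply Hnf.
    + destruct as_; [simpl in Hne; congruence|discriminate].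
    + intros a Ha. apply Hs, Hxs, in_map; auto.
    + intros ys Hne' Hinc Hlen. apply Hs. rewrite hom_meets by auto. apply Hprem.
      destruct ys; [congruence|discriminate].
      intros y Hy. apply in_map_iff in Hy. destruct Hy as [a [<- Ha]]. apply in_map; auto.
      rewrite length_map; auto.
Qed.

Lemma proj_meets (I : Type) (A : I -> uSL) (xs : list (prod_uSL I A)) i :
  meets xs i = meets (map (fun a => a i) xs).
Proof. induction xs; simpl; auto. unfold pmeet. rewrite IHxs. reflexivity. Qed.

Lemma P_prod n (I : Type) (A : I -> uSL) (F : forall i, A i -> Prop) :
  (forall i, uSL_n n (A i) (F i)) -> uSL_n n (prod_uSL I A) (fun a => forall i, F i (a i)).
Proof.
  intros H. split.
  { exists (pone I A). intro i. unfold pone. destruct (H i) as [[x Fx] [Hu _]]. eapply upset_one; eauto. }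
  split.
  - intros x y Hx Hle i. destruct (H i) as [_ [Hu _]]. apply (Hu (x i)); auto.
    unfold le in *. simpl in Hle. apply (f_equal (fun f => f i)) in Hle. exact Hle.
  - intros xs Hne Hxs Hprem i. destruct (H i) as [_ [_ Hnf]].
    rewrite proj_meets. apply Hnf.
    + destruct xs; [congruence|discriminate].
    + intros y Hy. apply in_map_iff in Hy. destruct Hy as [x [<- Hx]]. apply Hxs; auto.
    + intros ys' Hne' Hinc Hlen. destruct (lift_map (fun a => a i) xs ys' Hinc) as [ys [E Hi]]. subst ys'.
      rewrite <- proj_meets. rewrite length_map in Hlen. apply Hprem; auto.
      intro E; subst; simpl in Hne'; congruence.
Qed.

Fixpoint allw {T : Type} (as_ : list T) (k : nat) : list (list T) :=
  match k with
  | 0 => [[]]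
  | S k' => [] :: flat_map (fun w => map (fun a => a :: w) as_) (allw as_ k')
  end.
Lemma allw_in {T : Type} (as_ : list T) k : forall ys, (forall y, In y ys -> In y as_) -> length ys <= k -> In ys (allw as_ k).
Proof. induction k; intros ys Hi Hl. destruct ys; simpl in *; [auto|lia].
  destruct ys as [|y ys]; simpl; auto. right. apply in_flat_map. exists ys; split.
  apply IHk. intros; apply Hi; simpl; auto. simpl in Hl; lia. apply (in_map (fun a => a :: ys)). apply Hi; simpl; auto. Qed.
Lemma allw_sound {T : Type} (as_ : list T) k : forall ys, In ys (allw as_ k) ->
  (forall y, In y ys -> In y as_) /\ length ys <= k.
Proof. induction k; simpl; intros ys H. destruct H as [<-|[]]; simpl; split; auto; tauto.
  destruct H as [<-|H]. simpl; split; [tauto|lia].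
  apply in_flat_map in H. destruct H as [w [Hw H]]. apply in_map_iff in H. destruct H as [a [<- Ha]].
  destruct (IHk w Hw) as [H1 H2]. simpl; split; [|lia]. intros y [<-|Hy]; auto. Qed.

Lemma P_fin n : finitary (uSL_n n).
Proof.
  intros I A F U B G q HU HK Hq Hsu Hker HG.
  split.
  { exists (q (pone I A)). apply HG. apply (U_up U (fun _ => True)); auto. apply U_full; auto.
    intros i _. unfold pone. destruct (HK i) as [[x Fx] [Hu _]]. eapply upset_one; eauto. }
  split.
  - intros x y Gx Hle. destruct (Hsu x) as [a <-], (Hsu y) as [b <-].
    apply HG in Gx; apply HG.
    assert (E : q (pmeet I A a b) = q a) by (exact (eq_trans (proj1 Hq a b) Hle)).
    apply Hker in E. apply (U_up U _ _ HU (U_and _ _ _ HU Gx E)).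
    intros i [H1 H2]. destruct (HK i) as [_ [Hu _]]. apply (Hu (a i)); auto.
  - intros xs Hne Hxs Hprem. destruct (lift_surj q xs Hsu) as [as_ <-].
    rewrite <- hom_meets by auto. apply HG.
    set (Ws := allw as_ n).
    assert (H1 : U (fun i => forall a, In a as_ -> F i (a i))).
    { apply U_forall_list; auto. intros a Ha. apply HG. apply Hxs, in_map; auto. }
    assert (H2 : U (fun i => forall ys, In ys Ws -> ys <> [] -> F i (meets ys i))).
    { apply (U_forall_list U Ws (fun ys i => ys <> [] -> F i (meets ys i))); auto.
      intros ys Hys. destruct (allw_sound as_ n ys Hys) as [Hi Hl].
      destruct (classic (ys = [])) as [->|Hn].
      - apply (U_up U (fun _ => True)); auto. apply U_full; auto. intros; congruence.
      - apply (U_up U (fun i => F i (meets ys i))); auto. apply HG. rewrite hom_meets by auto.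
        apply Hprem. destruct ys; [congruence|discriminate].
        intros y Hy. apply in_map_iff in Hy. destruct Hy as [a [<- Ha]]. apply in_map; auto.
        rewrite length_map; auto. }
    apply (U_up U _ _ HU (U_and _ _ _ HU H1 H2)). intros i [G1 G2].
    destruct (HK i) as [_ [_ Hnf]]. rewrite proj_meets. apply Hnf.
    + destruct as_; [simpl in Hne; congruence|discriminate].
    + intros y Hy. apply in_map_iff in Hy. destruct Hy as [a [<- Ha]]. auto.
    + intros ys' Hne' Hinc Hlen. destruct (lift_map (fun a => a i) as_ ys' Hinc) as [ys [E Hi]]. subst ys'.
      rewrite <- proj_meets. rewrite length_map in Hlen. apply G2. apply allw_in; auto.
      intro E; subst; simpl in Hne'; congruence.
Qed.

Lemma uSLn_logical n : logical (uSL_n n).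
Proof.
  split; [|split; [|split; [|split]]].
  - intros A B F G h Hh _ Hsu Hs H. eapply P_img; eauto.
  - intros A B F G e He _ Hs H. eapply P_pre; eauto.
  - intros I A F H. apply P_prod; auto.
  - intros A B F G h Hh Hs H. eapply P_pre; eauto.
  - intros A B F G h Hh Hsu Hs H. eapply P_img; eauto.
Qed.

Theorem mainTheorem15 :
  (forall K : cls,
     logical K -> ~ trivial_cls K -> subclass K uSL_inf ->
     subclass uSL_omega K \/ exists n : nat, 1 <= n /\ same_class K (uSL_n n)) /\
  (forall K : cls,
     (logical K /\ finitary K /\ ~ trivial_cls K /\ subclass K uSL_inf /\
      ~ subclass uSL_inf K)
     <-> exists n : nat, 1 <= n /\ same_class K (uSL_n n)).
Proof.
  split.
  - intros K HK Hnt Hsub. destruct (main1 K HK Hnt Hsub) as [Hall|Hex]; auto.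
    left; apply lemOmega; auto.
  - intros K; split.
    + intros [HK [Hfin [Hnt [Hsub Hnot]]]]. destruct (main1 K HK Hnt Hsub) as [Hall|Hex]; auto.
      exfalso; apply Hnot; apply lemInf; auto.
    + intros [n [Hn Hs]].
      destruct (uSLn_logical n) as [L1 [L2 [L3 [L4 L5]]]].
      split; [|split; [|split; [|split]]].
      * split; [|split; [|split; [|split]]].
        -- intros A B F G h H1 H2 H3 H4 H5. apply Hs. eapply L1; eauto. apply Hs; auto.
        -- intros A B F G h H1 H2 H3 H4. apply Hs. eapply L2; eauto. apply Hs; auto.
        -- intros I A F H. apply Hs. apply L3. intro i; apply Hs; auto.
        -- intros A B F G h H1 H2 H3. apply Hs. eapply L4; eauto. apply Hs; auto.
        -- intros A B F G h H1 H2 H3 H4. apply Hs. eapply L5; eauto. apply Hs; auto.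
      * intros I A F U B G q H1 H2 H3 H4 H5 H6. apply Hs. eapply P_fin; eauto. intro i; apply Hs; auto.
      * intro Ht. assert (KB : K Bs (FB n)) by (apply Hs; apply B_in_uSLn; auto).
        destruct (Ht Bs (FB n) KB (fun _ => true)) as [i [_ Hi]]. discriminate.
      * intros A F H. apply Hs in H. destruct H as [Hne [Hu _]]. split; auto.
      * intro H. assert (Hi : uSL_inf Bs (FB (S n))).
        { split. exists (@one Bs). exists 0; split; auto; lia. apply FB_upset. }
        apply H, Hs in Hi. destruct Hi as [_ Hf]. apply (B_not_nfilter n Hn Hf).
Qed.
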